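(* Let $(H,\cdot,1,\Delta,\varepsilon,\rhd)$ be a right Post-Hopf algebra which is connected as a coalgebra, with coradical filtration $(H^{\leq n})_{n\in\mathbb{N}}$. Then for every $n\in\mathbb{N}$, $H^{\leq n}\rhd H\subseteq H^{\leq n}$.
   Context: With $\rho(x)=x-\varepsilon(x)1$, $\tilde\Delta(x)=\Delta(x)-1\otimes x-x\otimes 1$ on $\ker\varepsilon$, $\tilde\Delta(1)=0$, $\tilde\Delta^{(0)}=\rho$, $\tilde\Delta^{(1)}=\tilde\Delta$, $\tilde\Delta^{(k)}=(\tilde\Delta\otimes\mathrm{Id}^{\otimes k-1})\circ\tilde\Delta^{(k-1)}$: $H$ is connected as a coalgebra if every $x$ satisfies $\tilde\Delta^{(n)}(x)=0$ for some $n$, and $H^{\leq n}=\{x\in H:\tilde\Delta^{(n)}(x)=0\}$. A right Post-Hopf algebra is a Hopf algebra $(H,\cdot,1,\Delta,\varepsilon)$ with a coalgebra morphism $\rhd:H\otimes H\to H$ such that $(x\cdot y)\rhd z=(x\rhd z^{(1)})\cdot(y\rhd z^{(2)})$, $(x\rhd y)\rhd z=x\rhd\big((y\rhd z^{(1)})\cdot z^{(2)}\big)$ (Sweedler notation), and $\gamma_\rhd(x)(y)=y\rhd x$ is invertible in the convolution algebra $\mathrm{Hom}(H,\mathrm{End}(H))$ with product $(f\star g)(x)=f(x^{(1)})\circ g(x^{(2)})$. *)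

(* Defs.v *)
(* Hopf algebras over a field k, with tensor products
   represented by finite formal sums of pure tensors; equality in the
   tensor power H^{(x)m} is defined by the universal property: two formal
   sums are equal iff every m-multilinear map into every k-vector space
   takes the same value on them. *)
From HB Require Import structures.
From mathcomp Require Import all_boot all_order all_algebra.
Set Implicit Arguments. Unset Strict Implicit. Unset Printing Implicit Defensive.
Import GRing.Theory.
Local Open Scope ring_scope.

Section Hopf.
Variables (k : fieldType) (H : algType k).

Definition multilinear (m : nat) (W : lmodType k) (f : seq H -> W) : Prop :=
  forall (l r : seq H) (a : k) (x y : H), (size l + size r).+1 = m ->
    f (l ++ (a *: x + y) :: r) = a *: f (l ++ x :: r) + f (l ++ y :: r).

Definition teq (m : nat) (s t : seq (seq H)) : Prop :=
  forall (W : lmodType k) (f : seq H -> W), multilinear m f ->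
    \sum_(u <- s) f u = \sum_(u <- t) f u.

Definition pairs2 (s : seq (H * H)) : seq (seq H) :=
  [seq [:: p.1; p.2] | p <- s].

Variables (Delta : H -> seq (H * H)) (eps : H -> k).

Record is_hopf : Prop := IsHopf {
  eps_linear : forall (a : k) (x y : H), eps (a *: x + y) = a * eps x + eps y;
  Delta_linear : forall (a : k) (x y : H),
    teq 2 (pairs2 (Delta (a *: x + y)))
          (pairs2 ([seq (a *: p.1, p.2) | p <- Delta x] ++ Delta y));
  coassoc : forall x : H,
    teq 3 (flatten [seq [seq [:: q.1; q.2; p.2] | q <- Delta p.1] | p <- Delta x])
          (flatten [seq [seq [:: p.1; q.1; q.2] | q <- Delta p.2] | p <- Delta x]);
  counit_l : forall x : H, \sum_(p <- Delta x) eps p.1 *: p.2 = x;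
  counit_r : forall x : H, \sum_(p <- Delta x) eps p.2 *: p.1 = x;
  Delta_mul : forall x y : H,
    teq 2 (pairs2 (Delta (x * y)))
          (pairs2 [seq (p.1 * q.1, p.2 * q.2) | p <- Delta x, q <- Delta y]);
  Delta_one : teq 2 (pairs2 (Delta 1)) [:: [:: 1; 1]];
  eps_mul : forall x y : H, eps (x * y) = eps x * eps y;
  eps_one : eps 1 = 1;
  antipode : exists S : H -> H,
    (forall (a : k) (x y : H), S (a *: x + y) = a *: S x + S y) /\
    (forall x : H, \sum_(p <- Delta x) S p.1 * p.2 = eps x *: 1) /\
    (forall x : H, \sum_(p <- Delta x) p.1 * S p.2 = eps x *: 1)
}.

Record is_right_post_hopf (tr : H -> H -> H) : Prop := IsRPH {
  tr_linear_l : forall (a : k) (x x' y : H), tr (a *: x + x') y = a *: tr x y + tr x' y;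
  tr_linear_r : forall (a : k) (x y y' : H), tr x (a *: y + y') = a *: tr x y + tr x y';
  (* coalgebra morphism H (x) H -> H, with Delta(x(x)y) = (x1(x)y1)(x)(x2(x)y2) *)
  tr_Delta : forall x y : H,
    teq 2 (pairs2 (Delta (tr x y)))
          (pairs2 [seq (tr p.1 q.1, tr p.2 q.2) | p <- Delta x, q <- Delta y]);
  tr_eps : forall x y : H, eps (tr x y) = eps x * eps y;
  tr_mul : forall x y z : H,
    tr (x * y) z = \sum_(p <- Delta z) tr x p.1 * tr y p.2;
  tr_tr : forall x y z : H,
    tr (tr x y) z = tr x (\sum_(p <- Delta z) tr y p.1 * p.2);
  (* gamma(x)(y) = y |> x is convolution-invertible in Hom(H, End(H)),
     whose unit is x |-> eps(x) id *)
  tr_gamma_inv : exists g : H -> H -> H,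
    (forall (a : k) (x x' y : H), g (a *: x + x') y = a *: g x y + g x' y) /\
    (forall (a : k) (x y y' : H), g x (a *: y + y') = a *: g x y + g x y') /\
    (forall x y : H, \sum_(p <- Delta x) tr (g p.2 y) p.1 = eps x *: y) /\
    (forall x y : H, \sum_(p <- Delta x) g p.1 (tr y p.2) = eps x *: y)
}.

Definition rho (x : H) : H := x - eps x *: 1.

(* reduced coproduct on all of H: the linear extension of
   x |-> Delta x - 1(x)x - x(x)1 on ker eps with 1 |-> 0, i.e.
   Delta~(x) = Delta(rho x) - 1 (x) rho x - rho x (x) 1 *)
Definition rDelta (x : H) : seq (H * H) :=
  Delta (rho x) ++ [:: (- 1, rho x); (- rho x, 1)].

(* one step of (Delta~ (x) Id^{(x) k}) on formal sums *)
Definition rstep (s : seq (seq H)) : seq (seq H) :=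
  flatten [seq [seq [:: p.1, p.2 & behead u] | p <- rDelta (head 0 u)] | u <- s].

Fixpoint rDelta_pos (n : nat) (x : H) : seq (seq H) :=
  match n with
  | 0 => pairs2 (rDelta x)
  | n'.+1 => rstep (rDelta_pos n' x)
  end.

(* Delta~^{(n)}, an element of H^{(x)(n+1)} *)
Definition rDelta_iter (n : nat) (x : H) : seq (seq H) :=
  match n with
  | 0 => [:: [:: rho x]]
  | n'.+1 => rDelta_pos n' x
  end.

Definition coradical_filt (n : nat) (x : H) : Prop :=
  teq n.+1 (rDelta_iter n x) [::].

Definition connected_coalg : Prop := forall x : H, exists n, coradical_filt n x.

End Hopf.

(* Main.v *)
Require Import Defs.
From mathcomp Require Import all_boot all_order all_algebra zify.
Set Implicit Arguments. Unset Strict Implicit. Unset Printing Implicit Defensive.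
Import GRing.Theory.
Local Open Scope ring_scope.

Section Proof.
Variables (k : fieldType) (H : algType k).

Definition lin1 (W : lmodType k) (g : H -> W) :=
  forall (a : k) (x y : H), g (a *: x + y) = a *: g x + g y.

Lemma lin1_0 (W : lmodType k) (g : H -> W) : lin1 g -> g 0 = 0.
Proof. move=> hg; have := hg 1 0 0; rewrite !scale1r addr0 => e.
by apply: (@addrI _ (g 0)); rewrite addr0 -e. Qed.

Lemma lin1_D (W : lmodType k) (g : H -> W) x y : lin1 g -> g (x + y) = g x + g y.
Proof. by move=> hg; rewrite -{1}[x]scale1r hg scale1r. Qed.

Lemma lin1_Z (W : lmodType k) (g : H -> W) a x : lin1 g -> g (a *: x) = a *: g x.
Proof. by move=> hg; rewrite -[a *: x]addr0 hg lin1_0 // addr0. Qed.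

Lemma lin1_N (W : lmodType k) (g : H -> W) x : lin1 g -> g (- x) = - g x.
Proof. by move=> hg; rewrite -(scaleN1r x) (lin1_Z _ _ hg) scaleN1r. Qed.

Lemma lin1_sum (W : lmodType k) (g : H -> W) I (r : seq I) (F : I -> H) :
  lin1 g -> g (\sum_(i <- r) F i) = \sum_(i <- r) g (F i).
Proof. move=> hg; elim: r => [|i r IH]; first by rewrite !big_nil lin1_0.
by rewrite !big_cons lin1_D // IH. Qed.

Lemma lin1_sumf (W : lmodType k) I (r : seq I) (G : I -> H -> W) :
  (forall i, lin1 (G i)) -> lin1 (fun x => \sum_(i <- r) G i x).
Proof. move=> hG a x y; rewrite scaler_sumr -big_split /=.
by apply: eq_bigr => i _; rewrite hG. Qed.

Definition bil (W : lmodType k) (h : H -> H -> W) :=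
  (forall z, lin1 (h^~ z)) /\ (forall z, lin1 (h z)).

Lemma ml2 (W : lmodType k) (h : H -> H -> W) : bil h ->
  multilinear 2 (fun w : seq H => h (nth 0 w 0) (nth 0 w 1)).
Proof.
move=> [h1 h2] [|b [|c l]] r a x y /= Hs.
- case: r Hs => [|d [|e r]] //= _; exact: h1.
- case: r Hs => [|d r] //= _; exact: h2.
- by [].
Qed.

Lemma teq2_bil (s t : seq (H * H)) (W : lmodType k) (h : H -> H -> W) :
  teq 2 (pairs2 s) (pairs2 t) -> bil h ->
  \sum_(p <- s) h p.1 p.2 = \sum_(p <- t) h p.1 p.2.
Proof.
move=> T hb; have := T W _ (ml2 hb); rewrite !big_map /=; exact.
Qed.

Definition tril (W : lmodType k) (h : H -> H -> H -> W) :=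
  (forall y z, lin1 (fun x => h x y z)) /\ (forall x z, lin1 (fun y => h x y z))
  /\ (forall x y, lin1 (h x y)).

Lemma ml3 (W : lmodType k) (h : H -> H -> H -> W) : tril h ->
  multilinear 3 (fun w : seq H => h (nth 0 w 0) (nth 0 w 1) (nth 0 w 2)).
Proof.
move=> [h1 [h2 h3]] [|b [|c [|d l]]] r a x y /= Hs.
- case: r Hs => [|e [|f [|g r]]] //= _; exact: h1.
- case: r Hs => [|e [|f r]] //= _; exact: h2.
- case: r Hs => [|e r] //= _; exact: h3.
- by [].
Qed.

Variables (Delta : H -> seq (H * H)) (eps : H -> k) (tr : H -> H -> H).
Hypothesis hH : is_hopf Delta eps.
Hypothesis hT : is_right_post_hopf Delta eps tr.

Lemma trL z : lin1 (tr^~ z). Proof. move=> a x y /=; exact: (tr_linear_l hT a x y z). Qed.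
Lemma trR x : lin1 (tr x). Proof. move=> a y y2; exact: (tr_linear_r hT a x y y2). Qed.
Lemma mulL b : lin1 (fun a : H => a * b).
Proof. by move=> c x y; rewrite mulrDl scalerAl. Qed.
Lemma mulR b : lin1 (fun a : H => b * a).
Proof. by move=> c x y; rewrite mulrDr scalerAr. Qed.

Lemma tr1 z : tr 1 z = eps z *: 1.
Proof.
have [S [SL [SA _]]] := antipode hH.
have SL' : lin1 S by move=> a x y; exact: SL.
have D1 : teq 2 (pairs2 (Delta 1)) (pairs2 [:: (1, 1)]) := Delta_one hH.
have Ta w : tr 1 w = \sum_(p <- Delta w) tr 1 p.1 * tr 1 p.2.
  by rewrite -(tr_mul hT) mulr1.
have E w : \sum_(q <- Delta w) S (tr 1 q.1) * tr 1 q.2 = eps w *: 1.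
  have -> : eps w = eps (tr 1 w) by rewrite (tr_eps hT) (eps_one hH) mul1r.
  rewrite -SA.
  have bS : bil (fun a b : H => S a * b).
    split=> c x y z'; first by rewrite SL mulrDl scalerAl.
    by rewrite mulrDr scalerAr.
  rewrite (teq2_bil (tr_Delta hT 1 w) bS) big_allpairs_dep /=.
  have bS2 : bil (fun a b : H => \sum_(q <- Delta w) S (tr a q.1) * tr b q.2).
    split=> c; apply: lin1_sumf => q a x y /=.
      by rewrite (trL q.1) SL mulrDl scalerAl.
    by rewrite (trL q.2) mulrDr scalerAr.
  by rewrite (teq2_bil D1 bS2) big_seq1.
have ML : multilinear 3 (fun w : seq H =>
    S (tr 1 (nth 0 w 0)) * tr 1 (nth 0 w 1) * tr 1 (nth 0 w 2)).
  apply: (ml3 (h := fun a b c => S (tr 1 a) * tr 1 b * tr 1 c)).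
  split; [|split] => ? ? ? ? ?.
  - by rewrite /= trR SL mulrDl mulrDl !scalerAl.
  - by rewrite /= trR mulrDr mulrDl -scalerAr -scalerAl.
  - by rewrite /= trR mulrDr -scalerAr.
have C := coassoc hH z ML.
rewrite !big_allpairs_dep /= in C.
rewrite -{1}(counit_l hH z) (lin1_sum _ _ (trR 1)).
have -> : \sum_(p <- Delta z) tr 1 (eps p.1 *: p.2) =
  \sum_(p <- Delta z) \sum_(q <- Delta p.1) S (tr 1 q.1) * tr 1 q.2 * tr 1 p.2.
  apply: eq_bigr => p _.
  by rewrite (lin1_Z _ _ (trR 1)) -{1}[tr 1 p.2]mul1r scalerAl -E mulr_suml.
rewrite C -(E z); apply: eq_bigr => p _.
by rewrite (Ta p.2) mulr_sumr; apply: eq_bigr => q _; rewrite mulrA.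
Qed.

Lemma epsL a x y : eps (a *: x + y) = a * eps x + eps y.
Proof. exact: (eps_linear hH a x y). Qed.

Lemma eps_rho x : eps (rho eps x) = 0.
Proof. by rewrite /rho -scaleNr addrC epsL (eps_one hH) mulr1 addNr. Qed.

Lemma rho_rho x : rho eps (rho eps x) = rho eps x.
Proof. by rewrite [rho eps (rho eps x)]/rho eps_rho scale0r subr0. Qed.

Lemma rho_lin a x y : rho eps (a *: x + y) = a *: rho eps x + rho eps y.
Proof.
rewrite /rho epsL scalerBr scalerA scalerDl opprD !addrA; congr (_ + _).
by rewrite -!addrA; congr (_ + _); rewrite addrC.
Qed.

Lemma rho_tr x y : rho eps (tr x y) = tr (rho eps x) y.
Proof.
rewrite /rho (tr_eps hT) (lin1_D _ _ (trL y)) (lin1_N _ (trL y)).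
by rewrite (lin1_Z _ _ (trL y)) tr1 scalerA.
Qed.

Lemma iterS n x : rDelta_iter Delta eps n.+1 x = rstep Delta eps (rDelta_iter Delta eps n x).
Proof.
case: n => [|n] //=.
by rewrite /rstep /= cats0 {2}/rDelta rho_rho.
Qed.

Lemma rD_sum (W : lmodType k) (F : H * H -> W) z :
  \sum_(p <- rDelta Delta eps z) F p =
  \sum_(p <- Delta (rho eps z)) F p + F (- 1, rho eps z) + F (- rho eps z, 1).
Proof. by rewrite big_cat /= !big_cons big_nil addr0 addrA. Qed.

Lemma ac6 (V : zmodType) (A A' B B' C C' : V) :
  A + A' + (B + B') + (C + C') = A + B + C + (A' + B' + C').
Proof.
rewrite -!addrA; congr (A + _); rewrite [LHS]addrCA; congr (B + _).
by rewrite [RHS]addrCA; congr (A' + _); rewrite addrCA.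
Qed.

Lemma rD_lin (W : lmodType k) (h : H -> H -> W) a x y : bil h ->
  \sum_(p <- rDelta Delta eps (a *: x + y)) h p.1 p.2 =
  a *: \sum_(p <- rDelta Delta eps x) h p.1 p.2 + \sum_(p <- rDelta Delta eps y) h p.1 p.2.
Proof.
move=> hb; have [h1 h2] := hb.
rewrite !rD_sum rho_lin (teq2_bil (Delta_linear hH _ _ _) hb) big_cat big_map /=.
rewrite h2 opprD -scalerN h1 /=.
under eq_bigr => p _ do rewrite (lin1_Z _ _ (h1 p.2)).
rewrite -scaler_sumr !scalerDr.
set A := a *: _; set B := a *: _; set C := a *: _.
set A' := \sum_(_ <- _) _; set B' := h _ _; set C' := h _ _.
by apply: ac6.
Qed.

Lemma rD_tr (W : lmodType k) (h : H -> H -> W) a b : bil h ->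
  \sum_(p <- rDelta Delta eps (tr a b)) h p.1 p.2 =
  \sum_(p <- rDelta Delta eps a) \sum_(q <- Delta b) h (tr p.1 q.1) (tr p.2 q.2).
Proof.
move=> hb; have [h1 h2] := hb.
rewrite !rD_sum rho_tr (teq2_bil (tr_Delta hT _ _) hb) big_allpairs_dep /=.
congr (_ + _ + _).
- transitivity (h (-1) (tr (rho eps a) (\sum_(q <- Delta b) eps q.1 *: q.2))).
    by rewrite (counit_l hH).
  rewrite (lin1_sum _ _ (trR _)) (lin1_sum _ _ (h2 _)); apply: eq_bigr => q _.
  rewrite (lin1_N _ (trL _)) tr1 -scalerN (lin1_Z _ _ (h1 _)).
  by rewrite (lin1_Z _ _ (trR _)) (lin1_Z _ _ (h2 _)).
- transitivity (h (tr (- rho eps a) (\sum_(q <- Delta b) eps q.2 *: q.1)) 1).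
    by rewrite (counit_r hH) (lin1_N _ (trL _)).
  rewrite (lin1_sum _ _ (trR _)) (lin1_sum _ _ (h1 _)); apply: eq_bigr => q _.
  rewrite tr1 (lin1_Z _ _ (h2 _)).
  by rewrite (lin1_Z _ _ (trR _)) (lin1_Z _ _ (h1 _)).
Qed.

Fixpoint Dn (n : nat) (y : H) : seq (seq H) :=
  match n with
  | 0 => [:: [:: y]]
  | n'.+1 => flatten [seq [seq [:: q.1, q.2 & behead v] | q <- Delta (head 0 v)]
                     | v <- Dn n' y]
  end.

Lemma Dn_size n y v : v \in Dn n y -> size v = n.+1.
Proof.
elim: n v => [|n IH] v /=; first by rewrite inE => /eqP ->.
by case/flatten_mapP => w /IH Hw /mapP [q _ ->] /=; rewrite size_behead Hw.
Qed.

Lemma R_size n x u : u \in rDelta_iter Delta eps n x -> size u = n.+1.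
Proof.
elim: n u => [|n IH] u; first by rewrite /= inE => /eqP ->.
rewrite iterS /rstep => /flatten_mapP [w /IH Hw /mapP [p _ ->]] /=.
by rewrite size_behead Hw.
Qed.

Definition mt (u v : seq H) := map (fun p => tr p.1 p.2) (zip u v).

Definition Fdef n y (W : lmodType k) (f : seq H -> W) u :=
  \sum_(v <- Dn n y) f (mt u v).

Lemma F_ml n y (W : lmodType k) (f : seq H -> W) :
  multilinear n.+1 f -> multilinear n.+1 (Fdef n y f).
Proof.
move=> hf l r a x z Hs; rewrite /Fdef scaler_sumr -big_split /=.
apply: eq_big_seq => v /Dn_size Hv.
have Hl : (size l < size v)%N by rewrite Hv -Hs ltnS leq_addr.
have Hd : size (drop (size l) v) = (size r).+1.
  by rewrite size_drop Hv -Hs; lia.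
rewrite -(cat_take_drop (size l) v).
case E: (drop (size l) v) Hd => [|b v2] //= [Hv2].
have Ht : size l = size (take (size l) v) by rewrite size_take Hl.
rewrite /mt !zip_cat // !map_cat /= (trL b) hf //.
by rewrite !size_map !size_zip -Ht Hv2 !minnn.
Qed.

Definition Gdef (W : lmodType k) (f : seq H -> W) u :=
  \sum_(p <- rDelta Delta eps (head 0 u)) f [:: p.1, p.2 & behead u].

Lemma bil_of n (W : lmodType k) (f : seq H -> W) r :
  multilinear n.+2 f -> size r = n -> bil (fun p1 p2 => f [:: p1, p2 & r]).
Proof.
move=> hf Hr; split => z a x y.
- by have := hf [::] (z :: r) a x y; apply; rewrite /= Hr.
- by have := hf [:: z] r a x y; apply; rewrite /= Hr.
Qed.

Lemma G_ml n (W : lmodType k) (f : seq H -> W) :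
  multilinear n.+2 f -> multilinear n.+1 (Gdef f).
Proof.
move=> hf [|c l] r a x z Hs /=.
- apply: (rD_lin (h := fun p1 p2 => f [:: p1, p2 & r])).
  by apply: (bil_of hf); move: Hs => /= [].
- rewrite scaler_sumr -big_split /=; apply: eq_bigr => p _.
  by have := hf [:: p.1, p.2 & l] r a x z; apply; move: Hs => /=; lia.
Qed.

Lemma rstep_sum (W : lmodType k) (f : seq H -> W) s :
  \sum_(u <- rstep Delta eps s) f u = \sum_(u <- s) Gdef f u.
Proof.
by rewrite /rstep big_allpairs_dep.
Qed.

Lemma main n : forall x y (W : lmodType k) (f : seq H -> W), multilinear n.+1 f ->
  \sum_(u <- rDelta_iter Delta eps n (tr x y)) f u =
  \sum_(u <- rDelta_iter Delta eps n x) Fdef n y f u.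
Proof.
elim: n => [|n IH] x y W f hf.
  by rewrite /= !big_seq1 /Fdef /= big_seq1 /mt /= rho_tr.
rewrite !iterS !rstep_sum (IH x y W (Gdef f) (G_ml hf)).
apply: eq_big_seq => u /R_size; case: u => [|c u'] //= [Hu'].
rewrite /Gdef /Fdef /=.
under [in RHS]eq_bigr do rewrite big_allpairs_dep /=.
rewrite exchange_big /=; apply: eq_big_seq => v /Dn_size.
case: v => [|b v'] //= [Hv'].
rewrite (rD_tr (h := fun p1 p2 => f [:: p1, p2 & mt u' v'])).
  by [].
apply: (bil_of hf).
by rewrite size_map size_zip Hu' Hv' minnn.
Qed.

End Proof.

Theorem lemma3p3 (k : fieldType) (H : algType k)
  (Delta : H -> seq (H * H)) (eps : H -> k) (tr : H -> H -> H) :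
  is_hopf Delta eps ->
  is_right_post_hopf Delta eps tr ->
  connected_coalg Delta eps ->
  forall (n : nat) (x y : H),
    coradical_filt Delta eps n x -> coradical_filt Delta eps n (tr x y).
Proof.
move=> hH hT _ n x y Hx W f hf.
rewrite (main hH hT x y hf) big_nil.
by have := Hx W _ (F_ml hT y hf); rewrite big_nil.
Qed.
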